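(* Let $k\geq1$ and $d_1,\dots,d_k\geq3$ be integers, and let $T=W_{d_1}\otimes\cdots\otimes W_{d_k}$. Let $A\subseteq(\mathbb{P}^1)^k$ be a zero-dimensional scheme such that $[T]\in\langle\nu_{d_1,\dots,d_k}(A)\rangle$. Then for all integers $a_1,\dots,a_k$ with $0\leq a_i\leq d_i-1$, we have $|\mathcal{I}_A(a_1,\dots,a_k)|\subseteq|\mathcal{I}_{Z_k}(a_1,\dots,a_k)|$; that is, every divisor of multidegree $(a_1,\dots,a_k)$ on $(\mathbb{P}^1)^k$ containing $A$ also contains $Z_k$.
   Context: Identify $S^d\mathbb{C}^2$ with binary forms in a basis $\{x,y\}$ (coordinates $x_i,y_i$ on the $i$-th factor), $W_d=x^{d-1}y$. $\nu_{d_1,\dots,d_k}:(\mathbb{P}^1)^k\to\mathbb{P}(S^{d_1}\mathbb{C}^2\otimes\cdots\otimes S^{d_k}\mathbb{C}^2)$, $([v_1],\dots,[v_k])\mapsto[v_1^{d_1}\otimes\cdots\otimes v_k^{d_k}]$ is the Segre–Veronese embedding; $\langle Y\rangle$ denotes linear span of a subscheme. $|\mathcal{I}_A(a_1,\dots,a_k)|$ is the projectivization of the space of multihomogeneous forms of multidegree $(a_1,\dots,a_k)$ vanishing on $A$ (divisors in $|\mathcal{O}(a_1,\dots,a_k)|$ containing $A$). Let $o_1=[x]\in\mathbb{P}^1$, $Z_1\subseteq\mathbb{P}^1$ the degree-2 scheme supported at $o_1$ with ideal $(\partial_y^2)$, and $Z_k=Z_1\times\cdots\times Z_1$. *)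

(* Defs.v *)
From HB Require Import structures.
From mathcomp Require Import all_boot all_algebra.
From mathcomp Require Import reals complex.
From mathcomp Require Import mpoly.

Set Implicit Arguments.
Unset Strict Implicit.
Unset Printing Implicit Defensive.

Import GRing.Theory.
Local Open Scope ring_scope.

(* Cox ring of (P^1)^k : C[x_1,y_1,...,x_k,y_k]; variable x_i is the
   (lshift k i)-th variable and y_i is the (rshift k i)-th one. *)
Definition xv (k : nat) (i : 'I_k) : 'I_(k + k) := lshift k i.
Definition yv (k : nat) (i : 'I_k) : 'I_(k + k) := rshift k i.

Notation CoxRing R k := {mpoly (R[i])[k + k]}.

Definition mdeg_i (k : nat) (m : 'X_{1..k + k}) (i : 'I_k) : nat :=
  (m (xv i) + m (yv i))%N.

(* p is a multihomogeneous form of multidegree a (0 counts as such) *)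
Definition is_multihomog (R : realType) (k : nat) (a : 'I_k -> nat)
    (p : CoxRing R k) : Prop :=
  forall m, m \in msupp p -> forall i, mdeg_i m i = a i.

Definition mcomponent (R : realType) (k : nat) (a : 'I_k -> nat)
    (p : CoxRing R k) : CoxRing R k :=
  \sum_(m <- msupp p | [forall i, mdeg_i m i == a i]) p@_m *: 'X_[m].

Definition is_ideal (R : realType) (k : nat) (I : CoxRing R k -> Prop) : Prop :=
  [/\ I 0, (forall p q, I p -> I q -> I (p + q)) &
      (forall p q, I p -> I (q * p))].

Definition multihomog_ideal (R : realType) (k : nat)
    (I : CoxRing R k -> Prop) : Prop :=
  is_ideal I /\ (forall a p, I p -> I (mcomponent a p)).

(* saturation w.r.t. the irrelevant ideal B = prod_i (x_i, y_i):
   B^m is generated by the monomials of multidegree (m,...,m) *)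
Definition B_saturated (R : realType) (k : nat) (I : CoxRing R k -> Prop) : Prop :=
  forall p : CoxRing R k,
    (exists m : nat, forall M : 'X_{1..k + k},
        (forall i, mdeg_i M i = m) -> I (p * 'X_[M])) -> I p.

(* bounded multigraded Hilbert function: dim (S/I)_a <= N for every a *)
Definition bounded_hilbert (R : realType) (k : nat) (I : CoxRing R k -> Prop) : Prop :=
  exists N : nat, forall (a : 'I_k -> nat) (F : 'I_N.+1 -> CoxRing R k),
    (forall t, is_multihomog a (F t)) ->
    exists c : 'I_N.+1 -> R[i], (exists t, c t != 0) /\ I (\sum_t c t *: F t).

(* A zero-dimensional closed subscheme A of (P^1)^k, encoded by its
   (B-saturated, multihomogeneous) ideal I_A. *)
Definition zerodim_subscheme (R : realType) (k : nat) (I : CoxRing R k -> Prop) : Prop :=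
  [/\ multihomog_ideal I, B_saturated I & bounded_hilbert I].

(* Coordinates on S^{d_1}C^2 (x) ... (x) S^{d_k}C^2 with respect to the basis
   (x)_i x^{d_i - j_i} y^{j_i}, j_i in {0..d_i}. *)
Definition TIdx (k : nat) (d : 'I_k -> nat) := {dffun forall i : 'I_k, 'I_(d i).+1}.

(* pullback nu^* l of the linear form l (given by its values on the basis)
   under the Segre-Veronese map nu_{d_1..d_k}: a form of multidegree d *)
Definition sv_pullback (R : realType) (k : nat) (d : 'I_k -> nat)
    (l : TIdx d -> R[i]) : CoxRing R k :=
  \sum_(j : TIdx d) l j *:
     \prod_(i < k) (('C(d i, j i))%:R *: ('X_(xv i) ^+ (d i - j i) * 'X_(yv i) ^+ (j i))).

(* T = W_{d_1} (x) ... (x) W_{d_k}, W_d = x^{d-1} y, in these coordinates *)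
Definition W_tensor (R : realType) (k : nat) (d : 'I_k -> nat) (j : TIdx d) : R[i] :=
  if [forall i, (j i : nat) == 1%N] then 1 else 0.

(* [T] lies in the linear span <nu(A)>: every hyperplane {l = 0} containing
   the subscheme nu(A) (i.e. nu^* l in I_A) contains [T]. *)
Definition in_span (R : realType) (k : nat) (I : CoxRing R k -> Prop)
    (d : 'I_k -> nat) (T : TIdx d -> R[i]) : Prop :=
  forall l : TIdx d -> R[i], I (sv_pullback l) -> \sum_(j : TIdx d) l j * T j = 0.

(* ideal of Z_k = Z_1 x ... x Z_1, Z_1 = V(y^2) at o_1 = [x]: (y_1^2,...,y_k^2) *)
Definition ideal_Zk (R : realType) (k : nat) (p : CoxRing R k) : Prop :=
  exists G : 'I_k -> CoxRing R k, p = \sum_(i < k) G i * 'X_(yv i) ^+ 2.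

(* Main.v *)
Require Import Defs.
From mathcomp Require Import all_boot all_algebra.
From mathcomp Require Import reals complex.
From mathcomp Require Import mpoly.
From mathcomp Require Import zify.
Import GRing.Theory Num.Theory.
Set Implicit Arguments.
Unset Strict Implicit.
Unset Printing Implicit Defensive.
Local Open Scope ring_scope.

Definition monj (k : nat) (d : 'I_k -> nat) (j : TIdx d) : 'X_{1..k + k} :=
  [multinom (match split v with inl i => (d i - j i)%N | inr i => (j i : nat) end) | v < k + k].

Lemma monj_x (k : nat) (d : 'I_k -> nat) (j : TIdx d) (i : 'I_k) : monj j (xv i) = (d i - j i)%N.
Proof. by rewrite /monj mnmE /xv (unsplitK (inl i : 'I_k + 'I_k)). Qed.

Lemma monj_y (k : nat) (d : 'I_k -> nat) (j : TIdx d) (i : 'I_k) : monj j (yv i) = j i.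
Proof. by rewrite /monj mnmE /yv (unsplitK (inr i : 'I_k + 'I_k)). Qed.

Lemma mnm_ext (k : nat) (m1 m2 : 'X_{1..k + k}) :
  (forall i, m1 (xv i) = m2 (xv i)) -> (forall i, m1 (yv i) = m2 (yv i)) -> m1 = m2.
Proof.
move=> hx hy; apply/mnmP => v; rewrite -[v]splitK; case: split => i /=.
  exact: hx. exact: hy.
Qed.

Lemma prod_monj (R : realType) (k : nat) (d : 'I_k -> nat) (j : TIdx d) (c : 'I_k -> R[i]) :
  \prod_(i < k) (c i *: ('X_(xv i) ^+ (d i - j i) * 'X_(yv i) ^+ (j i)) : CoxRing R k)
  = (\prod_(i < k) c i) *: 'X_[monj j].
Proof.
rewrite scaler_prod; congr (_ *: _).
rewrite [RHS]mpolyXE_id big_split_ord /= -big_split /=.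
apply: eq_bigr => i _; rewrite -/(xv i) -/(yv i) monj_x monj_y //.
Qed.

Lemma monj_inj (k : nat) (d : 'I_k -> nat) : injective (@monj k d).
Proof.
move=> j1 j2 h; apply/ffunP => i; apply: val_inj.
by have := congr1 (fun m : 'X_{1..k + k} => m (yv i)) h; rewrite /= !monj_y.
Qed.

Lemma cprod_neq0 (R : realType) (k : nat) (d : 'I_k -> nat) (j : TIdx d) :
  \prod_(i < k) ('C(d i, j i))%:R != 0 :> R[i].
Proof.
apply/prodf_neq0 => i _; rewrite pnatr_eq0 -lt0n bin_gt0.
by rewrite -ltnS ltn_ord.
Qed.

Lemma monj_of (k : nat) (d : 'I_k -> nat) (m : 'X_{1..k + k}) :
  (forall i, mdeg_i m i = d i) ->
  monj ([ffun i => inord (m (yv i))] : TIdx d) = m.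
Proof.
move=> hm; apply: mnm_ext => i; have := hm i; rewrite /mdeg_i => hi;
  rewrite ?monj_x ?monj_y ffunE inordK; lia.
Qed.

Lemma pullback_surj (R : realType) (k : nat) (d : 'I_k -> nat) (P : CoxRing R k) :
  is_multihomog d P ->
  sv_pullback (fun j : TIdx d => P@_(monj j) / \prod_(i < k) ('C(d i, j i))%:R) = P.
Proof.
move=> hP; rewrite /sv_pullback.
under eq_bigr => j _ do rewrite prod_monj scalerA divfK ?cprod_neq0 //.
apply/mpolyP => m; rewrite (raddf_sum (mcoeff m)).
rewrite (eq_bigr (fun j => P@_(monj j) * (monj j == m)%:R)); last by move=> j _; apply: (etrans (mcoeffZ _ _ _)); rewrite mcoeffX.
set jm : TIdx d := [ffun i => inord (m (yv i))].
case: (eqVneq (monj jm) m) => [<-|ne].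
  rewrite (bigD1 jm) //= eqxx mulr1 big1 ?addr0 // => j nj.
  by rewrite (inj_eq (@monj_inj k d)) (negbTE nj) mulr0.
rewrite big1; last first.
  move=> j _; case: (eqVneq (monj j) m) => [hj|]; last by rewrite mulr0.
  exfalso; move/eqP: ne; apply; rewrite -hj; congr monj.
  apply/ffunP => i; rewrite ffunE -hj monj_y; apply: val_inj => /=.
  by rewrite inordK // ltn_ord.
case: (boolP (m \in msupp P)) => hm; last by rewrite memN_msupp_eq0.
exfalso; move/eqP: ne; apply; apply: monj_of => i; exact: hP.
Qed.

Definition oneI (k : nat) (d : 'I_k -> nat) : TIdx d := [ffun i => inord 1].

Lemma oneI_val (k : nat) (d : 'I_k -> nat) i : (forall i, 0 < d i)%N -> (oneI d i : nat) = 1%N.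
Proof. by move=> hd; rewrite ffunE inordK // ltnS hd. Qed.

Lemma span_coef (R : realType) (k : nat) (d : 'I_k -> nat) (I : CoxRing R k -> Prop)
    (P : CoxRing R k) :
  (forall i, 0 < d i)%N -> in_span I (@W_tensor R k d) -> is_multihomog d P -> I P ->
  P@_(monj (oneI d)) = 0.
Proof.
move=> hd hsp hP IP.
have := hsp (fun j : TIdx d => P@_(monj j) / \prod_(i < k) ('C(d i, j i))%:R).
rewrite pullback_surj // => /(_ IP).
rewrite (bigD1 (oneI d)) //= [X in _ + X]big1 => [|j nj]; last first.
  rewrite /W_tensor; case: ifP => [h|]; last by rewrite mulr0.
  exfalso; move/eqP: nj; apply; apply/ffunP => i; apply: val_inj.
  by rewrite /= oneI_val //; apply/eqP; move/forallP: h; apply.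
rewrite /W_tensor; case: ifP => [_|]; last first.
  by move/negbT/forallPn => [x]; rewrite oneI_val // eqxx.
rewrite addr0 mulr1 => /eqP; rewrite mulf_eq0 invr_eq0 (negbTE (cprod_neq0 _ _)) orbF.
by move/eqP.
Qed.

Lemma mono_y2 (R : realType) (k : nat) (d : 'I_k -> nat) (I : CoxRing R k -> Prop)
    (a : 'I_k -> nat) (p : CoxRing R k) m :
  is_ideal I -> (forall i, 0 < d i)%N -> in_span I (@W_tensor R k d) ->
  (forall i, a i <= d i - 1)%N -> is_multihomog a p -> I p -> m \in msupp p ->
  exists i, (2 <= m (yv i))%N.
Proof.
move=> [_ _ hmul] hd hsp ha hp Ip hm.
case: (boolP [exists i, (2 <= m (yv i))%N]) => [/existsP [i hi]|hn]; first by exists i.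
exfalso.
have hy : forall i, (m (yv i) <= 1)%N.
  by move=> i; move/existsPn: hn => /(_ i); rewrite -ltnNge.
pose M := (monj (oneI d) - m)%MM.
have hle : (m <= monj (oneI d))%MM.
  apply/mnm_lepP => v; rewrite -[v]splitK; case: split => i /=;
  [rewrite -/(xv i) monj_x | rewrite -/(yv i) monj_y]; rewrite oneI_val //;
  have := hp m hm i; rewrite /mdeg_i; have := ha i; have := hd i; have := hy i; lia.
have IP : I (p * 'X_[M]) by rewrite mulrC; apply: hmul.
have hP : is_multihomog d (p * 'X_[M]).
  move=> m' hm' i; rewrite (perm_mem (msuppMX p M)) in hm'.
  case/mapP: hm' => m'' hm'' ->.
  rewrite /mdeg_i !mnmDE /M !mnmBE monj_x monj_y oneI_val //.
  have := hp _ hm'' i; have := hp _ hm i; rewrite /mdeg_i.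
  have := ha i; have := hd i; have := hy i; lia.
have := span_coef hd hsp hP IP.
have -> : monj (oneI d) = (M + m)%MM by rewrite /M submK.
rewrite mcoeffMX => h0; move: hm; by rewrite mcoeff_msupp h0 eqxx.
Qed.

Lemma ideal_Zk0 (R : realType) (k : nat) : ideal_Zk (0 : CoxRing R k).
Proof. by exists (fun _ => 0); rewrite big1 // => i _; rewrite mul0r. Qed.

Lemma ideal_ZkD (R : realType) (k : nat) (p q : CoxRing R k) :
  ideal_Zk p -> ideal_Zk q -> ideal_Zk (p + q).
Proof.
move=> [G ->] [H ->]; exists (fun i => G i + H i).
by rewrite -big_split; apply: eq_bigr => i _; rewrite mulrDl.
Qed.

Lemma ideal_Zk_mono (R : realType) (k : nat) (c : R[i]) (m : 'X_{1..k + k}) (i : 'I_k) :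
  (2 <= m (yv i))%N -> ideal_Zk (c *: 'X_[m] : CoxRing R k).
Proof.
move=> hi; exists (fun j => if j == i then c *: 'X_[m - U_(yv i) *+ 2] else 0).
rewrite (bigD1 i) //= eqxx big1 ?addr0 => [|j /negbTE ->]; last by rewrite mul0r.
rewrite -scalerAl mpolyXn -mpolyXD submK //.
apply/mnm_lepP => v; rewrite mulmnE mnm1E; case: eqP => [<-|] //=.
Qed.

Unset Implicit Arguments.

Theorem lemma4p1 (R : realType) (k : nat) (d : 'I_k -> nat)
    (I : {mpoly (R[i])[k + k]} -> Prop) :
  (1 <= k)%N ->
  (forall i, 3 <= d i)%N ->
  zerodim_subscheme I ->
  in_span I (@W_tensor R k d) ->
  forall a : 'I_k -> nat, (forall i, a i <= d i - 1)%N ->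
  forall p : {mpoly (R[i])[k + k]}, is_multihomog a p -> I p -> ideal_Zk p.
Proof.
move=> _ hd [[hI _] _ _] hsp a ha p hp Ip.
have hd' : forall i, (0 < d i)%N by move=> i; have := hd i; lia.
rewrite (mpolyE p) big_seq; apply: (big_ind (@ideal_Zk R k)).
- exact: ideal_Zk0.
- exact: ideal_ZkD.
move=> m hm; have [i hi] := mono_y2 hI hd' hsp ha hp Ip hm.
exact: ideal_Zk_mono hi.
Qed.
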